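(* Let $\epsilon>0$, let $u\in\mathbb{R}^d$ with $\|u\|_2=1$ be an unknown utility vector, $\mathrm{util}(x)=u^Tx$, and let $D\subseteq\mathbb{R}^d$ be a finite set of tuples with $\|x\|_2\le1$, no two having the same utility. Run the streaming algorithm described in the context (with any parameters $m\ge 1$, $\gamma$) on $D$ in random order, and suppose the stream is terminated at an arbitrary moment, after which the algorithm performs its final step on the tuples that have arrived. Let $D'$ be the set of tuples that have arrived, $x^*=\arg\max_{x\in D'}\mathrm{util}(x)$, and assume $c:=\mathrm{util}(x^* )\ge 0$. Then the returned tuple $x'\in D'$ satisfies $\mathrm{util}(x^* )-\mathrm{util}(x')\le(\epsilon/c)\,\mathrm{util}(x^* )$, i.e. it is an $\epsilon/c$-regret tuple among $D'$.
   Context: Oracle: given two tuples, a comparison oracle returns the one with larger utility; the algorithm accesses $u$ only through it. Filter: a filter holds a set $S$ of tuples sorted by utility via oracle comparisons, $S=\{x_1,\dots,x_s\}$ with $\mathrm{util}(x_1)>\dots>\mathrm{util}(x_s)$. Write $S\vdash x$ if $\min_{\alpha_1,\dots,\alpha_{s-1}\ge 0}\big\|x-x_1-\sum_{j=1}^{s-1}\alpha_j(x_{j+1}-x_j)\big\|_2\le\epsilon$. The filter prunes $x$ iff $S\vdash x$ (an empty filter prunes nothing); add$(x)$ inserts $x$ into $S$; best returns $x_1$. Algorithm: start with an empty filter $F$, empty sequence $\Sigma$ of filters, empty pool $P$. For each arriving $x$: if some filter in $\Sigma$ prunes $x$, skip it; else if $|P|<m$, add $x$ to $P$; else add $x$ to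 $F$, let $P'=\{y\in P: F\text{ prunes }y\}$, and if $|P'|\ge\gamma|P|$ append $F$ to $\Sigma$, start a new empty $F$ and set $P\leftarrow P\setminus P'$. Final step: append $F$ to $\Sigma$, let $X$ be the best tuples of the nonempty filters in $\Sigma$, and return the best tuple of $X\cup P$ by pairwise comparisons. *)

(* Defs.v *)
From HB Require Import structures.
From mathcomp Require Import all_boot all_order all_algebra.
From mathcomp Require Import boolp reals.
Set Implicit Arguments. Unset Strict Implicit. Unset Printing Implicit Defensive.
Import Order.TTheory GRing.Theory Num.Theory.
Local Open Scope ring_scope.

Section Algo.
Variables (R : realType) (d : nat).
Notation tup := 'rV[R]_d.

Definition util (u x : tup) : R := \sum_(i < d) u 0 i * x 0 i.

Definition norm2 (x : tup) : R := Num.sqrt (\sum_(i < d) x 0 i ^+ 2).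

Definition sort_util (u : tup) (s : seq tup) : seq tup :=
  sort (fun a b => util u b <= util u a) s.

(* S |- x : min over alpha_j >= 0 of
   || x - x_1 - sum_{j=1}^{s-1} alpha_j (x_{j+1} - x_j) ||_2 <= eps.
   (The minimum is attained: distance to a closed finitely generated cone;
   so "min <= eps" is "some nonnegative alpha achieves <= eps".) *)
Definition entails (eps : R) (S : seq tup) (x : tup) : Prop :=
  match S with
  | [::] => False
  | x1 :: _ =>
      exists alpha : nat -> R, (forall j, 0 <= alpha j) /\
        norm2 (x - x1 - \sum_(j < (size S).-1)
                          alpha j *: (nth 0 S j.+1 - nth 0 S j)) <= eps
  end.

Definition prunes (eps : R) (S : seq tup) (x : tup) : bool := `[< entails eps S x >].

Definition fadd (u : tup) (S : seq tup) (x : tup) : seq tup := sort_util u (x :: S).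

Record state := State { stF : seq tup; stSigma : seq (seq tup); stP : seq tup }.

Definition init_state : state := State [::] [::] [::].

Definition step (eps : R) (u : tup) (m : nat) (gamma : R) (st : state) (x : tup)
  : state :=
  let: State F Sigma P := st in
  if has (fun G => prunes eps G x) Sigma then st
  else if (size P < m)%N then State F Sigma (rcons P x)
  else
    let F' := fadd u F x in
    let P' := filter (prunes eps F') P in
    if gamma * (size P)%:R <= (size P')%:R
    then State [::] (rcons Sigma F') (filter (predC (prunes eps F')) P)
    else State F' Sigma P.

Definition best_of (u : tup) (s : seq tup) : tup :=
  match s with
  | [::] => 0
  | c :: cs => foldl (fun a b => if util u a < util u b then b else a) c cs
  end.

Definition finish (u : tup) (st : state) : tup :=
  let: State F Sigma P := st in
  let Sigma' := rcons Sigma F in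
  let X := [seq head 0 G | G <- Sigma' & G != [::]] in
  best_of u (X ++ P).

Definition run (eps : R) (u : tup) (m : nat) (gamma : R) (s : seq tup) : tup :=
  finish u (foldl (step eps u m gamma) init_state s).

End Algo.

(* Main.v *)
Require Import Defs.
From HB Require Import structures.
From mathcomp Require Import all_boot all_order all_algebra.
From mathcomp Require Import boolp reals.
From mathcomp Require Import ring lra.
Import Order.TTheory GRing.Theory Num.Theory.
Local Open Scope ring_scope.
Set Implicit Arguments. Unset Strict Implicit.

Section Aux.
Variables (R : realType) (d : nat).
Local Notation tup := 'rV[R]_d.

Lemma util0 (u : tup) : util u 0 = 0.
Proof. by rewrite /util big1 // => i _; rewrite mxE mulr0. Qed.

Lemma utilD (u x y : tup) : util u (x + y) = util u x + util u y.
Proof. by rewrite /util -big_split; apply: eq_bigr => i _; rewrite mxE mulrDr. Qed.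

Lemma utilN (u x : tup) : util u (- x) = - util u x.
Proof. by rewrite /util -sumrN; apply: eq_bigr => i _; rewrite mxE mulrN. Qed.

Lemma utilB (u x y : tup) : util u (x - y) = util u x - util u y.
Proof. by rewrite utilD utilN. Qed.

Lemma utilZ (u x : tup) a : util u (a *: x) = a * util u x.
Proof. by rewrite /util mulr_sumr; apply: eq_bigr => i _; rewrite mxE mulrCA. Qed.

Lemma util_sum (u : tup) n (F : 'I_n -> tup) :
  util u (\sum_(j < n) F j) = \sum_(j < n) util u (F j).
Proof. exact: (big_morph (util u) (utilD u) (util0 u)). Qed.

Lemma util_le_eps (u r : tup) eps : 0 < eps -> norm2 u = 1 -> norm2 r <= eps ->
  util u r <= eps.
Proof.
move=> he hu hr.
have hu2 : \sum_(i < d) u 0 i ^+ 2 = 1.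
  have h0 : 0 <= \sum_(i < d) u 0 i ^+ 2 by apply: sumr_ge0 => i _; exact: sqr_ge0.
  by rewrite -(sqr_sqrtr h0); move: hu; rewrite /norm2 => ->; rewrite expr1n.
have hr2 : \sum_(i < d) r 0 i ^+ 2 <= eps ^+ 2.
  have h0 : 0 <= \sum_(i < d) r 0 i ^+ 2 by apply: sumr_ge0 => i _; exact: sqr_ge0.
  rewrite -(sqr_sqrtr h0).
  have hn : 0 <= norm2 r by rewrite /norm2 sqrtr_ge0.
  move: hr hn; rewrite /norm2; set a := Num.sqrt _ => h1 h2.
  by rewrite !expr2; apply: ler_pM.
have key : 2 * eps * util u r <= eps ^+ 2 * \sum_(i < d) u 0 i ^+ 2
                                   + \sum_(i < d) r 0 i ^+ 2.
  rewrite /util mulr_sumr mulr_sumr -big_split /=.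
  apply: ler_sum => i _.
  have := sqr_ge0 (eps * u 0 i - r 0 i); rewrite !expr2; nra.
rewrite hu2 mulr1 in key; nra.
Qed.

Definition ord_u (u : tup) := fun a b : tup => util u b <= util u a.

Lemma ord_u_total u : total (ord_u u).
Proof. by move=> a b; rewrite /ord_u le_total. Qed.

Lemma ord_u_trans u : transitive (ord_u u).
Proof. by move=> y x z h1 h2; rewrite /ord_u; exact: le_trans h2 h1. Qed.

Lemma sorted_head u (G : seq tup) x : sorted (ord_u u) G -> x \in G ->
  util u x <= util u (head 0 G).
Proof.
case: G => [//|h t] /= hp; rewrite in_cons => /orP[/eqP->//|hx].
by have /allP /(_ _ hx) := order_path_min (@ord_u_trans u) hp.
Qed.

Lemma entails_bound u eps (S : seq tup) x : 0 < eps -> norm2 u = 1 ->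
  sorted (ord_u u) S -> entails eps S x -> util u x <= util u (head 0 S) + eps.
Proof.
move=> he hu; case: S => [//|x1 t] /= hp [alpha [ha hn]].
have := util_le_eps he hu hn.
rewrite !utilB util_sum.
have : \sum_(j < size t) util u (alpha j *: (t`_j - (x1 :: t)`_j)) <= 0.
  apply: sumr_le0 => j _; rewrite utilZ utilB; apply: mulr_ge0_le0 => //.
  rewrite subr_le0 /=.
  by move/(pathP 0): hp => /(_ j (ltn_ord j)).
lra.
Qed.

Lemma foldl_best u (a : tup) l :
  let b := foldl (fun a b => if util u a < util u b then b else a) a l in
  b \in a :: l /\ forall y, y \in a :: l -> util u y <= util u b.
Proof.
elim: l a => [|z l IH] a /=.
  by split; [exact: mem_head | move=> y; rewrite inE => /eqP->].
set a' := if util u a < util u z then z else a.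
have [h1 h2] := IH a'.
have ha : util u a <= util u a' by rewrite /a'; case: ifP => h; [exact: ltW|].
have hz : util u z <= util u a' by rewrite /a'; case: ifP => h //; rewrite leNgt h.
split.
  move: h1; rewrite !inE => /orP[/eqP->|->]; last by rewrite !orbT.
  by rewrite /a'; case: ifP => _; rewrite eqxx ?orbT.
move=> y; rewrite !inE => /orP[/eqP->|/orP[/eqP->|hy]].
- exact: le_trans ha (h2 _ (mem_head _ _)).
- exact: le_trans hz (h2 _ (mem_head _ _)).
- by apply: h2; rewrite inE hy orbT.
Qed.

Lemma best_ofP u (l : seq tup) : l != [::] ->
  best_of u l \in l /\ forall y, y \in l -> util u y <= util u (best_of u l).
Proof. by case: l => [//|a l] _; exact: foldl_best. Qed.

Definition cov eps (st : state R d) (x : tup) :=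
  x \in stP st \/ x \in stF st \/
  exists2 G, G \in stSigma st & (x \in G \/ entails eps G x).

Inductive Inv eps u (st : state R d) (s : seq tup) : Prop :=
  InvI of (forall x, x \in stF st -> x \in s)
      & (forall G, G \in stSigma st -> forall x, x \in G -> x \in s)
      & (forall x, x \in stP st -> x \in s)
      & sorted (ord_u u) (stF st)
      & (forall G, G \in stSigma st -> sorted (ord_u u) G /\ G != [::])
      & (forall x, x \in s -> cov eps st x).

Lemma Inv_init eps u : Inv eps u (@init_state R d) [::].
Proof. by split. Qed.

Lemma Inv_step eps u m gamma st s x : Inv eps u st s ->
  Inv eps u (step eps u m gamma st x) (rcons s x).
Proof.
case: st => F Sig P [hF hS hP hsF hsS hc] /=.
have sub y : y \in s -> y \in rcons s x by rewrite mem_rcons inE => ->; rewrite orbT.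
have xin : x \in rcons s x by rewrite mem_rcons mem_head.
case: ifP => hhas.
  split => //=; [by move=> y /hF /sub|by move=> G /hS h y /h /sub|by move=> y /hP /sub|].
  move=> y; rewrite mem_rcons inE => /orP[/eqP->|/hc //].
  move/hasP: hhas => [G hG /asboolP hp]; right; right; exists G => //; by right.
case: ifP => hsz.
  split => //=; [by move=> y /hF /sub|by move=> G /hS h y /h /sub| |].
    by move=> y; rewrite mem_rcons inE => /orP[/eqP->//|/hP /sub].
  move=> y; rewrite mem_rcons inE => /orP[/eqP->|/hc].
    by left; rewrite mem_rcons mem_head.
  rewrite /cov /= => -[h|h]; last by right.
  by left; rewrite mem_rcons inE h orbT.
have memF' y : (y \in fadd u F x) = (y == x) || (y \in F).
  by rewrite /fadd /sort_util mem_sort inE.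
have sF' : sorted (ord_u u) (fadd u F x).
  exact: (sort_sorted (@ord_u_total u)).
have neF' : fadd u F x != [::].
  by apply/negP => /eqP e; have := memF' x; rewrite e eqxx.
have subF' y : y \in fadd u F x -> y \in rcons s x.
  by rewrite memF' => /orP[/eqP->//|/hF /sub].
case: ifP => hg.
  split => //=.
  - by move=> G; rewrite mem_rcons inE => /orP[/eqP->|/hS h y /h /sub].
  - by move=> y; rewrite mem_filter => /andP[_ /hP /sub].
  - by move=> G; rewrite mem_rcons inE => /orP[/eqP->|/hsS].
  move=> y; rewrite mem_rcons inE => /orP[/eqP->|/hc].
    right; right; exists (fadd u F x); first by rewrite mem_rcons mem_head.
    by left; rewrite memF' eqxx.
  rewrite /cov /= => -[h|[h|[G hG hG']]].
  - case hp: (prunes eps (fadd u F x) y).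
      right; right; exists (fadd u F x); first by rewrite mem_rcons mem_head.
      by right; apply/asboolP.
    by left; rewrite mem_filter /= hp h.
  - right; right; exists (fadd u F x); first by rewrite mem_rcons mem_head.
    by left; rewrite memF' h orbT.
  - by right; right; exists G => //; rewrite mem_rcons inE hG orbT.
split => //=; [by move=> G /hS h y /h /sub|by move=> y /hP /sub|].
move=> y; rewrite mem_rcons inE => /orP[/eqP->|/hc].
  by right; left; rewrite memF' eqxx.
rewrite /cov /= => -[h|[h|h]]; [by left|by right; left; rewrite memF' h orbT|].
by right; right.
Qed.

Lemma Inv_run eps u m gamma s :
  Inv eps u (foldl (step eps u m gamma) (@init_state R d) s) s.
Proof.
elim/last_ind: s => [|s x IH]; first exact: Inv_init.
by rewrite foldl_rcons; apply: Inv_step.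
Qed.

Lemma Inv_finish eps u st s x : 0 < eps -> norm2 u = 1 -> Inv eps u st s ->
  x \in s -> finish u st \in s /\ util u x <= util u (finish u st) + eps.
Proof.
move=> he hu; case: st => F Sig P [hF hS hP hsF hsS hc] hx /=.
set X := [seq head 0 G | G <- rcons Sig F & G != [::]].
have inX G : G \in rcons Sig F -> G != [::] -> head 0 G \in X ++ P.
  by move=> h1 h2; rewrite mem_cat; apply/orP; left; apply: map_f; rewrite mem_filter h2 h1.
have [y hy hxy] : exists2 y, y \in X ++ P & util u x <= util u y + eps.
  case: (hc x hx) => /= [h|[h|[G hG [h|h]]]].
  - by exists x; [rewrite mem_cat h orbT | lra].
  - have ne : F != [::] by apply/negP => /eqP e; rewrite e in h.
    exists (head 0 F); first by apply: inX => //; rewrite mem_rcons mem_head.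
    by have := sorted_head hsF h; lra.
  - have [sG neG] := hsS G hG.
    exists (head 0 G); first by apply: inX => //; rewrite mem_rcons inE hG orbT.
    by have := sorted_head sG h; lra.
  - have [sG neG] := hsS G hG.
    exists (head 0 G); first by apply: inX => //; rewrite mem_rcons inE hG orbT.
    exact: entails_bound.
have ne : X ++ P != [::] by apply/negP => /eqP e; rewrite e in hy.
have [hb1 hb2] := best_ofP u ne.
split; last by have := hb2 _ hy; lra.
move: hb1; rewrite mem_cat => /orP[|/hP //].
move=> /mapP [G]; rewrite mem_filter => /andP [neG]; rewrite mem_rcons inE.
case: G neG => [//|g t] _ hG -> /=.
by case/orP: hG => [/eqP e|/hS]; [apply: hF; rewrite -e mem_head|apply; exact: mem_head].
Qed.

End Aux.

Theorem theorem4p3 (R : realType) (d : nat) (eps : R) (u : 'rV[R]_d)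
    (D : seq 'rV[R]_d) (m : nat) (gamma : R) (order : seq 'rV[R]_d) (k : nat)
    (xstar : 'rV[R]_d) :
  0 < eps ->
  norm2 u = 1 ->
  uniq D ->
  (forall x, x \in D -> norm2 x <= 1) ->
  {in D &, injective (util u)} ->
  (1 <= m)%N ->
  perm_eq order D ->
  let D' := take k order in
  xstar \in D' ->
  (forall x, x \in D' -> util u x <= util u xstar) ->
  0 <= util u xstar ->
  let c := util u xstar in
  let x' := run eps u m gamma D' in
  [/\ x' \in D',
      c - util u x' <= eps &
      (0 < c -> c - util u x' <= (eps / c) * c)].
Proof.
move=> he hu _ _ _ _ _ D' hx _ _ c x'.
have [h1 h2] := Inv_finish he hu (Inv_run eps u m gamma D') hx.
have h3 : c - util u x' <= eps by rewrite /c /x' /run; lra.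
split => // hc; rewrite divfK //; exact: lt0r_neq0.
Qed.
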